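(* Let $k\ge2$ be a power of two, $A,B\subseteq\Gamma$ finite sets, and $P\subseteq A-B$. Then $$\left(\frac{\sum_{x\in P}r(x)}{|A|^{1/2}|B|^{1/2}}\right)^{4k}\le\mathsf{E}_{2k}(A,\dots,A,B,\dots,B)\,\mathsf{T}_k(P),$$ where $r(x)=|\{(a,b)\in A\times B: a-b=x\}|$.
   Context: $\Gamma$ is an abelian group. $(f\circ f)(x)=\sum_y f(y)f(y+x)$. $\mathsf{E}_{2k}(A,\dots,A,B,\dots,B)$ with $k$ copies of $A$ and $k$ of $B$ is $\sum_x(A\circ A)(x)^k(B\circ B)(x)^k$. $\mathsf{T}_k(P)=|\{(p_1,\dots,p_k,p_1',\dots,p_k')\in P^{2k}: p_1+\dots+p_k=p_1'+\dots+p_k'\}|$. *)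

(* Defs.v *)
From HB Require Import structures.
From mathcomp Require Import all_boot all_order all_algebra.
From mathcomp Require Import finmap.
Set Implicit Arguments. Unset Strict Implicit. Unset Printing Implicit Defensive.
Import Order.TTheory GRing.Theory Num.Theory.
Local Open Scope fset_scope.
Local Open Scope ring_scope.

(* (A o A)(x) = sum_y 1_A(y) 1_A(y + x) = #{ y in A | y + x in A } *)
Definition selfconv (G : zmodType) (A : {fset G}) (x : G) : nat :=
  #|` [fset y in A | y + x \in A]|.

(* The difference set A - A; (A o A)(x) = 0 outside it, so the sum over all x
   in Gamma defining E_{2k} reduces to a sum over this finite set. *)
Definition diffset (G : zmodType) (A B : {fset G}) : {fset G} :=
  [fset a - b | a in A, b in B].

Definition E2k (G : zmodType) (k : nat) (A B : {fset G}) : nat :=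
  \sum_(x <- diffset A A) (selfconv A x ^ k * selfconv B x ^ k)%N.

Definition Tk (G : zmodType) (k : nat) (P : {fset G}) : nat :=
  #|[set pq : {ffun 'I_k -> P} * {ffun 'I_k -> P} |
      \sum_(i < k) val (pq.1 i) == \sum_(i < k) val (pq.2 i)]|.

Definition rAB (G : zmodType) (A B : {fset G}) (x : G) : nat :=
  \sum_(a <- A) \sum_(b <- B) (nat_of_bool ((a - b)%R == x)).

(* Main.v *)
Require Import Defs.
From HB Require Import structures.
From mathcomp Require Import all_boot all_order all_algebra.
From mathcomp Require Import finmap.
From mathcomp Require Import zify.
Set Implicit Arguments. Unset Strict Implicit. Unset Printing Implicit Defensive.
Import Order.TTheory GRing.Theory Num.Theory.


Lemma sum_delta (T : eqType) (s : seq T) y (F : T -> nat) :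
  uniq s -> \sum_(x <- s) ((x == y) * F x) = (y \in s) * F y.
Proof.
elim: s => [|x s IH] /=; first by rewrite big_nil.
move=> /andP[xs us]; rewrite big_cons IH // in_cons.
case: (eqVneq x y) => [<-|nxy] /=.
  by rewrite (negbTE xs) /= mul0n addn0.
by rewrite /= mul0n add0n.
Qed.

Lemma cs_nat (T : Type) (s : seq T) (f g : T -> nat) :
  (\sum_(i <- s) f i * g i) ^ 2 <= (\sum_(i <- s) f i ^ 2) * (\sum_(i <- s) g i ^ 2).
Proof.
rewrite -(leq_pmul2l (isT : 0 < 2)).
have E1 : 2 * (\sum_(i <- s) f i * g i) ^ 2 =
  \sum_(i <- s) \sum_(j <- s) 2 * (f i * g i * (f j * g j)).
  rewrite -mulnn big_distrl /= big_distrr /=; apply: eq_bigr => i _.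
  rewrite big_distrr /= big_distrr /=; apply: eq_bigr => j _; lia.
have E3 : \sum_(i <- s) \sum_(j <- s) f i ^ 2 * g j ^ 2 =
    (\sum_(i <- s) f i ^ 2) * (\sum_(i <- s) g i ^ 2).
  rewrite big_distrl /=; apply: eq_bigr => i _; by rewrite big_distrr.
rewrite E1; apply: (@leq_trans (\sum_(i <- s) \sum_(j <- s) (f i ^ 2 * g j ^ 2 + f j ^ 2 * g i ^ 2))).
  apply: leq_sum => i _; apply: leq_sum => j _.
  have H : forall a b : nat, 2 * (a * b) <= a ^ 2 + b ^ 2 by move=> a b; apply: (nat_Cauchy a b).
  have := H (f i * g j) (f j * g i); rewrite !expnMn.
  by have -> : f i * g i * (f j * g j) = f i * g j * (f j * g i) by lia.
rewrite (eq_bigr (fun i => \sum_(j <- s) f i ^ 2 * g j ^ 2 + \sum_(j <- s) f j ^ 2 * g i ^ 2)); last first.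
  by move=> i _; rewrite big_split.
rewrite big_split /= [X in _ + X]exchange_big /= E3; lia.
Qed.


Section Kern.
Variables (G : zmodType) (A B P : {fset G}).

Definition K (d c : G) : nat := \sum_(a <- A) ((a - d)%R \in P) * ((a - c)%R \in P).
Fixpoint Kp n (b c : G) : nat :=
  if n is n'.+1 then \sum_(d <- B) Kp n' b d * K d c else (b == c).

Lemma K_sym d c : K d c = K c d.
Proof. by apply: eq_bigr => a _; rewrite mulnC. Qed.

Lemma Kp_comp m n b c : c \in B ->
  Kp (m + n) b c = \sum_(d <- B) Kp m b d * Kp n d c.
Proof.
elim: n c => [|n IH] c cB.
  rewrite addn0 /= (eq_bigr (fun d => (d == c) * Kp m b d)); last by move=> d _; rewrite mulnC.
  by rewrite sum_delta ?fset_uniq // cB mul1n.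
rewrite addnS.
change (Kp (m+n).+1 b c) with (\sum_(e <- B) Kp (m+n) b e * K e c).
transitivity (\sum_(e <- B) (\sum_(d <- B) Kp m b d * Kp n d e) * K e c).
  rewrite [LHS]big_seq [RHS]big_seq; apply: eq_bigr => e eB; by rewrite IH.
transitivity (\sum_(e <- B) \sum_(d <- B) Kp m b d * (Kp n d e * K e c)).
  by apply: eq_bigr => e _; rewrite big_distrl /=; apply: eq_bigr => d _; rewrite mulnA.
rewrite exchange_big /=; apply: eq_bigr => d _; by rewrite big_distrr.
Qed.

Lemma Kp1 b c : Kp 1 b c = (b \in B) * K b c.
Proof.
rewrite /= (eq_bigr (fun d => (d == b) * K d c)); last by move=> d _; rewrite eq_sym.
by rewrite sum_delta ?fset_uniq.
Qed.

Lemma Kp_sym n b c : b \in B -> c \in B -> Kp n b c = Kp n c b.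
Proof.
elim: n b c => [|n IH] b c bB cB; first by rewrite /= eq_sym.
rewrite -add1n Kp_comp // /= big_seq [RHS]big_seq; apply: eq_bigr => d dB.
by rewrite add0n -[\sum_(_ <- _) _]/(Kp 1 b d) Kp1 bB mul1n (IH d c) // mulnC K_sym.
Qed.

Definition Rw n b := \sum_(c <- B) Kp n b c.
Definition Q n := \sum_(b <- B) Rw n b.
Definition tr n := \sum_(b <- B) Kp n b b.

Lemma Q_double m : Q (m + m) = \sum_(b <- B) Rw m b ^ 2.
Proof.
rewrite /Q /Rw.
transitivity (\sum_(c <- B) \sum_(c' <- B) \sum_(b <- B) Kp m b c * Kp m b c').
  rewrite [LHS]big_seq [RHS]big_seq; apply: eq_bigr => c cB.
  rewrite [LHS]big_seq [RHS]big_seq; apply: eq_bigr => c' c'B.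
  rewrite Kp_comp // [LHS]big_seq [RHS]big_seq; apply: eq_bigr => b bB; by rewrite Kp_sym.
transitivity (\sum_(c <- B) \sum_(b <- B) \sum_(c' <- B) Kp m b c * Kp m b c').
  by apply: eq_bigr => c _; rewrite exchange_big.
rewrite exchange_big /=; apply: eq_bigr => b _.
by rewrite -mulnn big_distrl /=; apply: eq_bigr => c _; rewrite big_distrr.
Qed.

Lemma Q_sq m : Q m ^ 2 <= #|` B| * Q (m + m).
Proof.
have H := cs_nat B (Rw m) (fun _ => 1).
rewrite Q_double mulnC card_fset_sum1.
have E1 : \sum_(i <- B) Rw m i * 1 = Q m by apply: eq_bigr => i _; rewrite muln1.
have E2 : \sum_(i <- B) 1 ^ 2 = \sum_(i <- B) 1 by [].
by rewrite E1 E2 in H.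
Qed.

Lemma Q_tr m : Q (m + m) <= #|` B| * tr (m + m).
Proof.
rewrite Q_double /tr big_distrr /= big_seq [X in _ <= X]big_seq; apply: leq_sum => b bB.
have H := cs_nat B (Kp m b) (fun _ => 1).
have E1 : \sum_(i <- B) Kp m b i * 1 = Rw m b by apply: eq_bigr => i _; rewrite muln1.
have E2 : \sum_(i <- B) 1 ^ 2 = #|` B| by rewrite card_fset_sum1.
rewrite E1 E2 in H; apply: (leq_trans H); rewrite mulnC leq_mul2l Kp_comp //.
apply/orP; right; apply: eq_leq; rewrite [LHS]big_seq [RHS]big_seq; apply: eq_bigr => c cB.
by rewrite [Kp m c b]Kp_sym // mulnn.
Qed.

Lemma Kp_le n b c : 0 < n -> Kp n b c <= #|` A| ^ n * #|` B| ^ n.-1.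
Proof.
have KA : forall d e, K d e <= #|` A|.
  move=> d e; rewrite card_fset_sum1 /K; apply: leq_sum => a _; by case: (_ \in P); case: (_ \in P).
elim: n c => [//|[|n] IH] c _.
  rewrite Kp1 expn1 expn0 muln1; case: (b \in B) => //; by rewrite mul1n.
rewrite /= -/Kp.
apply: (@leq_trans (\sum_(d <- B) #|` A| ^ n.+1 * #|` B| ^ n * #|` A|)).
  apply: leq_sum => d _; apply: leq_mul => //; exact: IH.
have -> : \sum_(d <- B) #|` A| ^ n.+1 * #|` B| ^ n * #|` A| = #|` B| * (#|` A| ^ n.+1 * #|` B| ^ n * #|` A|).
  by rewrite [#|` B|]card_fset_sum1 big_distrl /=; apply: eq_bigr => d _; rewrite mul1n.
rewrite /= [in X in _ <= X]expnS [#|` B| ^ n.+1]expnS; apply: eq_leq; rewrite !mulnA; set x := #|` A|; set y := #|` B|; set u := x ^ n.+1; set v := y ^ n; lia.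
Qed.

End Kern.


Section Walk.
Variables (G : zmodType) (P : {fset G}).

Lemma sum_shift (X Y : {fset G}) d (h : G -> nat) :
  \sum_(a <- X) ((a - d)%R \in Y) * h a = \sum_(y <- Y) ((d + y)%R \in X) * h (d + y)%R.
Proof.
transitivity (\sum_(a <- X) \sum_(y <- Y) ((y == (a - d)%R) * h a)).
  apply: eq_bigr => a _; rewrite -big_distrl /=; congr (_ * _).
  rewrite (eq_bigr (fun y => (y == (a - d)%R) * 1)); last by move=> y _; rewrite muln1.
  by rewrite sum_delta ?fset_uniq // muln1.
rewrite exchange_big /=; apply: eq_bigr => y _.
rewrite (eq_bigr (fun a => (a == (d + y)%R) * h a)); last first.
  move=> a _; congr (_ * _); congr (nat_of_bool _).
  by rewrite eq_sym subr_eq addrC.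
by rewrite sum_delta ?fset_uniq.
Qed.

Fixpoint endw n (b : G) (p q : nat -> G) : G :=
  if n is n'.+1 then (endw n' b p q + p n' - q n')%R else b.
Fixpoint validw (A B : {fset G}) n b (p q : nat -> G) : bool :=
  if n is n'.+1 then [&& validw A B n' b p q, endw n' b p q \in B
                       & (endw n' b p q + p n')%R \in A] else true.

Lemma endw_eq n b p q p' q' : (forall i, i < n -> p i = p' i) -> (forall i, i < n -> q i = q' i) ->
  endw n b p q = endw n b p' q'.
Proof.
elim: n => [//|n IH] Hp Hq /=.
rewrite IH ?Hp ?Hq // => i Hi; [apply: Hp | apply: Hq]; exact: ltnW.
Qed.

Lemma validw_eq A B n b p q p' q' : (forall i, i < n -> p i = p' i) -> (forall i, i < n -> q i = q' i) ->
  validw A B n b p q = validw A B n b p' q'.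
Proof.
elim: n => [//|n IH] Hp Hq /=.
have Hp1 : forall i, i < n -> p i = p' i by move=> i Hi; apply: Hp; exact: ltnW.
have Hq1 : forall i, i < n -> q i = q' i by move=> i Hi; apply: Hq; exact: ltnW.
by rewrite (IH Hp1 Hq1) (endw_eq b Hp1 Hq1) Hp.
Qed.

Lemma endwE n b p q : endw n b p q = (b + \sum_(i < n) (p i - q i))%R.
Proof.
elim: n => [|n IH] /=; first by rewrite big_ord0 addr0.
by rewrite IH big_ord_recr /= addrA addrA.
Qed.

Lemma endw_shift n b x p q : endw n (b + x)%R p q = (endw n b p q + x)%R.
Proof. rewrite !endwE; by rewrite addrAC. Qed.

Lemma validw_shift A B n b x p q :
  validw A B n b p q && validw A B n (b + x)%R p q =
  validw [fset y in A | (y + x)%R \in A]%fset [fset y in B | (y + x)%R \in B]%fset n b p q.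
Proof.
elim: n => [//|n IH] /=.
rewrite -IH !inE endw_shift.
have -> : (endw n b p q + x + p n = endw n b p q + p n + x)%R by rewrite addrAC.
by case: (validw _ _ _ _ _ _); case: (validw _ _ _ _ _ _); case: (_ \in B); case: (_ \in B);
  case: (_ \in A); case: (_ \in A).
Qed.
End Walk.


Definition extf (T : Type) n (g : {ffun 'I_n -> T}) (t : T) : {ffun 'I_n.+1 -> T} :=
  [ffun i => if unlift ord_max i is Some j then g j else t].

Lemma extf_widen T n (g : {ffun 'I_n -> T}) t (j : 'I_n) : extf g t (widen_ord (leqnSn n) j) = g j.
Proof.
rewrite ffunE.
have -> : widen_ord (leqnSn n) j = lift ord_max j.
  by apply: ord_inj; rewrite lift_max.
by rewrite liftK.
Qed.

Lemma extf_max T n (g : {ffun 'I_n -> T}) t : extf g t ord_max = t.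
Proof. by rewrite ffunE unlift_none. Qed.

Lemma sum_ffunS (T : finType) n (F : {ffun 'I_n.+1 -> T} -> nat) :
  \sum_f F f = \sum_(g : {ffun 'I_n -> T}) \sum_(t : T) F (extf g t).
Proof.
rewrite pair_bigA /=.
pose h (gt : {ffun 'I_n -> T} * T) := extf gt.1 gt.2.
pose h' (f : {ffun 'I_n.+1 -> T}) := ([ffun j => f (widen_ord (leqnSn n) j)], f ord_max).
have hK : cancel h h'.
  move=> [g t]; rewrite /h /h' /= extf_max; congr (_, _).
  by apply/ffunP => j; rewrite ffunE extf_widen.
have h'K : cancel h' h.
  move=> f; apply/ffunP => i; rewrite /h /h' /= ffunE.
  case: unliftP => [j ->|->] //.
  rewrite ffunE; congr (f _); apply: ord_inj; by rewrite lift_max.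
rewrite (reindex h) //; exists h' => x _; [exact: hK | exact: h'K].
Qed.

Section Lab.
Variables (G : zmodType) (P : {fset G}).
Local Notation labT n := ({ffun 'I_n -> P} * {ffun 'I_n -> P})%type.

Definition fnat n (f : {ffun 'I_n -> P}) (i : nat) : G := (\sum_(j < n | val j == i) val (f j))%R.

Lemma fnat_ord n (f : {ffun 'I_n -> P}) (i : 'I_n) : fnat f i = val (f i).
Proof. by rewrite /fnat (big_pred1 i). Qed.

Lemma fnat_ext n (g : {ffun 'I_n -> P}) t i : i < n -> fnat (extf g t) i = fnat g i.
Proof.
move=> Hi; rewrite /fnat big_mkcond big_ord_recr /= [in RHS]big_mkcond /=.
have -> : (n == i) = false by apply/negbTE; rewrite neq_ltn Hi orbT.
rewrite addr0; apply: eq_bigr => j _; by rewrite extf_widen.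
Qed.

Lemma fnat_last n (g : {ffun 'I_n -> P}) t : fnat (extf g t) n = val t.
Proof.
rewrite /fnat big_mkcond big_ord_recr /= eqxx extf_max big1 ?add0r //.
move=> j _; by rewrite ltn_eqF.
Qed.

Lemma sum_pair n (F : labT n -> nat) : \sum_(pq : labT n) F pq = \sum_g1 \sum_g2 F (g1, g2).
Proof. by rewrite pair_bigA; apply: eq_bigr => [[]]. Qed.

Definition L (A B : {fset G}) n b c : nat :=
  \sum_(pq : labT n) (validw A B n b (fnat pq.1) (fnat pq.2) && (endw n b (fnat pq.1) (fnat pq.2) == c)).

Lemma sumP_delta (y c : G) : \sum_(t : P) ((y - val t)%R == c : nat) = ((y - c)%R \in P).
Proof.
transitivity (\sum_(x <- P) ((y - x)%R == c : nat)); first by rewrite big_seq_fsetE.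
rewrite (eq_bigr (fun x => (x == (y - c)%R) * 1)); last first.
  move=> x _; rewrite muln1; congr (nat_of_bool _).
  by rewrite subr_eq [RHS]eq_sym subr_eq addrC.
by rewrite sum_delta ?fset_uniq // muln1.
Qed.

Lemma K_lab A d c : K A P d c = \sum_(t1 : P) \sum_(t2 : P) (((d + val t1)%R \in A) * ((d + val t1 - val t2)%R == c)).
Proof.
rewrite /K (sum_shift A P d (fun a => ((a - c)%R \in P) : nat)) big_seq_fsetE /=.
apply: eq_bigr => t1 _; by rewrite -big_distrr /= sumP_delta.
Qed.

Lemma step_eq A B n b c (g1 g2 : {ffun 'I_n -> P}) t1 t2 :
  validw A B n.+1 b (fnat (extf g1 t1)) (fnat (extf g2 t2)) &&
   (endw n.+1 b (fnat (extf g1 t1)) (fnat (extf g2 t2)) == c)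
 = [&& validw A B n b (fnat g1) (fnat g2), endw n b (fnat g1) (fnat g2) \in B,
      (endw n b (fnat g1) (fnat g2) + val t1)%R \in A &
      ((endw n b (fnat g1) (fnat g2) + val t1 - val t2)%R == c)].
Proof.
have H1 : forall i, i < n -> fnat (extf g1 t1) i = fnat g1 i by move=> i Hi; rewrite fnat_ext.
have H2 : forall i, i < n -> fnat (extf g2 t2) i = fnat g2 i by move=> i Hi; rewrite fnat_ext.
rewrite /= (validw_eq A B b H1 H2) (endw_eq b H1 H2) !fnat_last.
by rewrite !andbA.
Qed.

Lemma Lab A B n b c : Kp A B P n b c = L A B n b c.
Proof.
elim: n c => [|n IH] c.
  rewrite /L /= (eq_bigr (fun _ => (b == c : nat))) //.
  by rewrite sum_nat_const card_prod !card_ffun card_ord /= expn0 !mul1n.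
rewrite [LHS]/=.
transitivity (\sum_(d <- B) L A B n b d * K A P d c).
  by apply: eq_bigr => d _; rewrite IH.
transitivity (\sum_(pq : labT n) ((endw n b (fnat pq.1) (fnat pq.2) \in B) *
   ((validw A B n b (fnat pq.1) (fnat pq.2) : nat) * K A P (endw n b (fnat pq.1) (fnat pq.2)) c))).
  rewrite /L; under eq_bigr => d _ do rewrite big_distrl /=.
  rewrite exchange_big /=; apply: eq_bigr => pq _.
  rewrite (eq_bigr (fun d => (d == endw n b (fnat pq.1) (fnat pq.2)) *
     ((validw A B n b (fnat pq.1) (fnat pq.2) : nat) * K A P d c))); last first.
    move=> d _; rewrite eq_sym.
    by case: (validw _ _ _ _ _ _); case: (_ == _); rewrite ?mul1n ?mul0n.
  by rewrite sum_delta ?fset_uniq.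
rewrite /L sum_pair [RHS]sum_pair [RHS]sum_ffunS; apply: eq_bigr => g1 _.
under [RHS]eq_bigr => t1 _ do rewrite sum_ffunS.
rewrite [RHS]exchange_big /=; apply: eq_bigr => g2 _.
under [RHS]eq_bigr => t1 _ do under eq_bigr => t2 _ do rewrite step_eq.
rewrite K_lab big_distrr big_distrr /=; apply: eq_bigr => t1 _.
rewrite big_distrr big_distrr /=; apply: eq_bigr => t2 _.
by case: (validw _ _ _ _ _ _); case: (_ \in B); case: (_ \in A); case: (_ == c).
Qed.
End Lab.


Section Tr.
Variables (G : zmodType) (A B P : {fset G}) (k : nat).
Hypothesis hk : 0 < k.
Local Notation labT := ({ffun 'I_k -> P} * {ffun 'I_k -> P})%type.

Definition cl (pq : labT) : bool := (\sum_(i < k) val (pq.1 i) == \sum_(i < k) val (pq.2 i))%R.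
Definition nu (pq : labT) : nat := \sum_(b <- B) validw A B k b (fnat pq.1) (fnat pq.2).

Lemma closedE b (pq : labT) : (endw k b (fnat pq.1) (fnat pq.2) == b) = cl pq.
Proof.
rewrite endwE -[X in _ == X]addr0 (inj_eq (addrI b)) sumrB subr_eq0 /cl; congr (_ == _); apply: eq_bigr => i _; exact: fnat_ord.
Qed.

Lemma tr_lab : tr A B P k = \sum_(pq : labT) cl pq * nu pq.
Proof.
rewrite /tr; under eq_bigr => b _ do rewrite Lab.
rewrite /L exchange_big /=; apply: eq_bigr => pq _.
rewrite /nu big_distrr /=; apply: eq_bigr => b _.
by rewrite closedE; case: (cl pq); case: (validw _ _ _ _ _ _).
Qed.

Lemma Tk_sum : Tk k P = \sum_(pq : labT) cl pq.
Proof.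
by rewrite /Tk -sum1_card big_mkcond /=; apply: eq_bigr => pq _; rewrite inE.
Qed.

Lemma validw_first (A' B' : {fset G}) n (b : G) (p q : nat -> G) : 0 < n -> validw A' B' n b p q -> (b + p 0%N)%R \in A'.
Proof.
elim: n => [//|[|n] IH] _ /=; first by case/andP.
by case/and3P => H _ _; apply: IH.
Qed.

Lemma nu2 (pq : labT) : nu pq ^ 2 = \sum_(x <- diffset A A) \sum_(b <- B)
   ((b + x)%R \in B) * validw [fset y in A | (y + x)%R \in A]%fset [fset y in B | (y + x)%R \in B]%fset
      k b (fnat pq.1) (fnat pq.2).
Proof.
set v := fun b => validw A B k b (fnat pq.1) (fnat pq.2).
rewrite -mulnn /nu big_distrl /=.
transitivity (\sum_(b <- B) \sum_(x <- diffset A A) ((b + x)%R \in B) * (v b && v (b + x)%R)).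
  apply: eq_bigr => b _; rewrite big_distrr /=.
  transitivity (\sum_(b' <- B) ((b' - b)%R \in diffset A A) * (v b * v b')).
    apply: eq_bigr => b' _.
    rewrite -/(v b) -/(v b'); case vb : (v b); case vb' : (v b'); rewrite ?muln0 ?mul0n ?muln1 //.
    have Hb := validw_first hk vb; have Hb' := validw_first hk vb'.
    suff -> : (b' - b)%R \in diffset A A by [].
    apply/imfset2P; exists (b' + fnat pq.1 0%N)%R => //; exists (b + fnat pq.1 0%N)%R => //.
    by rewrite [(b + _)%R]addrC addrKA.
  rewrite (sum_shift B (diffset A A) b (fun b' => v b * v b')).
  apply: eq_bigr => x _; by case: (v b); case: (v (b + x)%R); rewrite ?muln0 ?muln1.
rewrite exchange_big /=; apply: eq_bigr => x _; apply: eq_bigr => b _.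
by rewrite /v validw_shift.
Qed.

Lemma card_sc (X : {fset G}) x : selfconv X x = \sum_(b <- X) ((b + x)%R \in X).
Proof.
rewrite /selfconv card_fset_sum1 -big_fset_condE big_mkcond /=.
by apply: eq_bigr => b _; case: (_ \in X).
Qed.

Lemma sum_cl_nu2 : \sum_(pq : labT) cl pq * nu pq ^ 2 <= E2k k A B.
Proof.
under eq_bigr => pq _ do rewrite nu2.
set Ax := fun x => [fset y in A | (y + x)%R \in A]%fset.
set Bx := fun x => [fset y in B | (y + x)%R \in B]%fset.
apply: (@leq_trans (\sum_(x <- diffset A A) \sum_(b <- B) ((b + x)%R \in B) * Kp (Ax x) (Bx x) P k b b)).
  apply: eq_leq.
  under eq_bigr => pq _ do rewrite big_distrr /=.
  rewrite exchange_big /=; apply: eq_bigr => x _.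
  under eq_bigr => pq _ do rewrite big_distrr /=.
  rewrite exchange_big /=; apply: eq_bigr => b _.
  rewrite Lab /L big_distrr /=; apply: eq_bigr => pq _.
  rewrite closedE.
  by case: (cl pq); case: (_ \in B); case: (validw _ _ _ _ _ _).
rewrite /E2k; apply: leq_sum => x _.
apply: (@leq_trans (\sum_(b <- B) ((b + x)%R \in B) * (#|` Ax x| ^ k * #|` Bx x| ^ k.-1))).
  apply: leq_sum => b _; rewrite leq_mul2l; apply/orP; right; exact: Kp_le.
rewrite -big_distrl /= -card_sc.
have -> : #|` Ax x| = selfconv A x by [].
have -> : #|` Bx x| = selfconv B x by [].
case: k hk => [//|k'] _ /=; rewrite [selfconv B x ^ k'.+1]expnS.
set a := selfconv A x; set c := selfconv B x; set u := a ^ k'.+1; set w := c ^ k'.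
apply: eq_leq; rewrite -/u; lia.
Qed.
Lemma main4 : tr A B P k ^ 2 <= Tk k P * E2k k A B.
Proof.
have H := cs_nat (index_enum labT) (fun pq => (cl pq : nat)) (fun pq => cl pq * nu pq).
have E1 : \sum_(pq <- index_enum labT) cl pq * (cl pq * nu pq) = tr A B P k.
  by rewrite tr_lab; apply: eq_bigr => pq _; case: (cl pq); rewrite ?mul0n ?mul1n.
have E2 : \sum_(pq <- index_enum labT) (cl pq : nat) ^ 2 = Tk k P.
  by rewrite Tk_sum; apply: eq_bigr => pq _; case: (cl pq).
have E3 : \sum_(pq <- index_enum labT) (cl pq * nu pq) ^ 2 = \sum_(pq : labT) cl pq * nu pq ^ 2.
  by apply: eq_bigr => pq _; case: (cl pq); rewrite ?mul0n ?mul1n.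
rewrite E1 E2 E3 in H; apply: (leq_trans H); rewrite leq_mul2l; apply/orP; right.
exact: sum_cl_nu2.
Qed.
End Tr.


Section Chain.
Variables (G : zmodType) (A B P : {fset G}).

Definition Ssum := \sum_(x <- P) rAB A B x.

Lemma S_eq : Ssum = \sum_(a <- A) \sum_(b <- B) ((a - b)%R \in P).
Proof.
rewrite /Ssum /rAB exchange_big /=; apply: eq_bigr => a _.
rewrite exchange_big /=; apply: eq_bigr => b _.
rewrite (eq_bigr (fun x => (x == (a - b)%R) * 1)); last by move=> x _; rewrite muln1 eq_sym.
by rewrite sum_delta ?fset_uniq // muln1.
Qed.

Lemma S2 : Ssum ^ 2 <= #|` A| * Q A B P 1.
Proof.
have H := cs_nat A (fun a => \sum_(b <- B) ((a - b)%R \in P) : nat) (fun _ => 1).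
have E1 : \sum_(a <- A) (\sum_(b <- B) ((a - b)%R \in P) : nat) * 1 = Ssum.
  by rewrite S_eq; apply: eq_bigr => a _; rewrite muln1.
have E2 : \sum_(a <- A) (1 ^ 2) = #|` A| by rewrite card_fset_sum1.
rewrite E1 E2 mulnC in H; apply: (leq_trans H); rewrite leq_mul2l; apply/orP; right.
apply: eq_leq; rewrite /Q /Rw.
transitivity (\sum_(a <- A) \sum_(b <- B) \sum_(c <- B) (((a - b)%R \in P) * ((a - c)%R \in P))).
  apply: eq_bigr => a _; rewrite -mulnn big_distrl /=; apply: eq_bigr => b _.
  by rewrite big_distrr.
rewrite exchange_big /= big_seq [RHS]big_seq; apply: eq_bigr => b bB.
rewrite exchange_big /=; apply: eq_bigr => c _.
by rewrite -[RHS]/(Kp A B P 1 b c) Kp1 bB mul1n.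
Qed.

Hypothesis Bpos : 0 < #|` B|.

Lemma chain j : Ssum ^ (2 * 2 ^ j) * #|` B| <= #|` A| ^ (2 ^ j) * #|` B| ^ (2 ^ j) * Q A B P (2 ^ j).
Proof.
elim: j => [|j IH].
  rewrite !expn0 muln1 !expn1; have := S2; rewrite -(leq_pmul2r Bpos).
  by rewrite [_ * #|` B| * _]mulnAC.
have H2 := Q_sq A B P (2 ^ j).
have Hsq : (Ssum ^ (2 * 2 ^ j) * #|` B|) ^ 2 <= (#|` A| ^ (2 ^ j) * #|` B| ^ (2 ^ j) * Q A B P (2 ^ j)) ^ 2.
  by rewrite leq_exp2r.
rewrite -(leq_pmul2r Bpos).
have e : 2 ^ j.+1 = 2 ^ j + 2 ^ j by rewrite expnS mul2n addnn.
rewrite e.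
set S := Ssum; set a := #|` A|; set b := #|` B|; set m := 2 ^ j.
set q1 := Q A B P m; set q2 := Q A B P (m + m).
move: Hsq H2; rewrite -/m -/q1 -/q2 -/S -/a -/b => Hsq H2.
have L1 : S ^ (2 * (m + m)) * b * b = (S ^ (2 * m) * b) ^ 2.
  by rewrite expnMn -expnM -mulnn mulnA; congr (S ^ _ * b * b); lia.
have R1 : (a ^ m * b ^ m * q1) ^ 2 = a ^ (m + m) * b ^ (m + m) * q1 ^ 2.
  by rewrite !expnMn -!expnM muln2 addnn.
rewrite L1; apply: (leq_trans Hsq); rewrite R1 -[X in _ <= X]mulnA leq_mul2l.
by apply/orP; right; rewrite mulnC.
Qed.

Lemma chain_tr j : Ssum ^ (2 * 2 ^ j.+1) <= #|` A| ^ (2 ^ j.+1) * #|` B| ^ (2 ^ j.+1) * tr A B P (2 ^ j.+1).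
Proof.
have H := chain j.+1.
have e : 2 ^ j.+1 = 2 ^ j + 2 ^ j by rewrite expnS mul2n addnn.
have H3 := Q_tr A B P (2 ^ j); rewrite -e in H3.
rewrite -(leq_pmul2r Bpos); apply: (leq_trans H).
set a := #|` A| ^ 2 ^ j.+1 * #|` B| ^ 2 ^ j.+1.
rewrite -[X in _ <= X]mulnA leq_mul2l; apply/orP; right; by rewrite mulnC.
Qed.

Lemma main_nat j : Ssum ^ (4 * 2 ^ j.+1) <=
  (#|` A| * #|` B|) ^ (2 * 2 ^ j.+1) * (E2k (2 ^ j.+1) A B * Tk (2 ^ j.+1) P).
Proof.
set k := 2 ^ j.+1.
have hk : 0 < k by rewrite expn_gt0.
have H := chain_tr j; rewrite -/k in H.
have H4 := main4 A B P hk.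
have Hs : (Ssum ^ (2 * k)) ^ 2 <= (#|` A| ^ k * #|` B| ^ k * tr A B P k) ^ 2 by rewrite leq_exp2r.
rewrite -expnM in Hs; have -> : 4 * k = 2 * k * 2 by lia.
apply: (leq_trans Hs); rewrite !expnMn -!expnM.
have -> : k * 2 = 2 * k by lia.
by rewrite leq_mul2l; apply/orP; right; rewrite mulnC.
Qed.
End Chain.

Local Open Scope fset_scope.
Local Open Scope ring_scope.

Theorem proposition6 (R : rcfType) (G : zmodType) (k : nat)
  (hk2 : (2 <= k)%N) (hkpow : exists m : nat, k = (2 ^ m)%N)
  (A B P : {fset G}) (hP : P `<=` diffset A B) :
  ((\sum_(x <- P) (rAB A B x)%:R) /
     (Num.sqrt (#|` A|%:R : R) * Num.sqrt (#|` B|%:R : R))) ^+ (4 * k)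
  <= (E2k k A B)%:R * (Tk k P)%:R.
Proof.
case: hkpow => [[|j] hj]; first by rewrite hj in hk2.
rewrite -natr_sum -/(Ssum A B P).
have hk : (0 < 4 * k)%N by rewrite hj muln_gt0 expn_gt0.
have Rge0 : 0 <= (E2k k A B)%:R * (Tk k P)%:R :> R by rewrite -natrM ler0n.
case: (posnP #|` A|) => [A0|Apos].
  by rewrite A0 sqrtr0 mul0r invr0 mulr0 expr0n gtn_eqF.
case: (posnP #|` B|) => [B0|Bpos].
  by rewrite B0 sqrtr0 mulr0 invr0 mulr0 expr0n gtn_eqF.
have Hpos : 0 < Num.sqrt (#|` A|%:R : R) * Num.sqrt (#|` B|%:R : R).
  by rewrite mulr_gt0 // sqrtr_gt0 ltr0n.
rewrite expr_div_n ler_pdivrMr ?exprn_gt0 //.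
have -> : (4 * k = 2 * (2 * k))%N by rewrite mulnA.
rewrite [X in _ <= _ * X]exprM. rewrite [_ ^+ 2]exprMn !sqr_sqrtr ?ler0n // -!natrM -!natrX -natrM ler_nat.
have := main_nat A P Bpos j; rewrite -hj => H.
by rewrite mulnA [X in (_ <= X)%N]mulnC.

Qed.
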